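(* Let $k\ge 3$, let $w$ be a word over $\Sigma=\{a,b\}$, and let $j\ge k$ be a forbidden position in $w$ with respect to $S_k$. Then the position $j-k$ is forbidden in $w$ with respect to $S_k$ if and only if either $j-1$ is forbidden in $w$ or $w[j-k+1..j-1]\in\{a^{k-1},b^{k-1}\}$.
   Context: $\Sigma=\{a,b\}$. For $k\ge 3$, $S_k=\left(\Sigma^k\setminus\{ba^{k-1},b^{k-1}a\}\right)\cup\left(\Sigma^{k-1}\setminus\{a^{k-1},b^{k-1}\}\right)$. For a set $S$ of words, $\mathit{Pref}(S^* )$ is the set of all prefixes (including the empty word) of words in $S^*$. For a word $w=w_1\cdots w_n$ and indices $i,j$, $w[i..j]=w_iw_{i+1}\cdots w_j$ if $i\le j$ and the empty word if $i>j$. A position $j$ with $0\le j\le n-1$ is forbidden in $w$ (with respect to $S_k$) if $w[j+1..n]\notin\mathit{Pref}(S_k^* )$, i.e. the suffix of $w$ obtained by deleting the first $j$ letters is not a prefix of any word in $S_k^*$. *)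

(* Defs.v *)
From HB Require Import structures.
From mathcomp Require Import all_boot.
Set Implicit Arguments. Unset Strict Implicit. Unset Printing Implicit Defensive.

Inductive letter := la | lb.

Definition letter_eqb (x y : letter) : bool :=
  match x, y with la, la | lb, lb => true | _, _ => false end.
Lemma letter_eqP : Equality.axiom letter_eqb.
Proof. by case; case; constructor. Qed.
HB.instance Definition _ := hasDecEq.Build letter letter_eqP.

Definition word := seq letter.

Definition inS (k : nat) (u : word) : bool :=
  ((size u == k) && (u != lb :: nseq k.-1 la) && (u != rcons (nseq k.-1 lb) la))
  || ((size u == k.-1) && (u != nseq k.-1 la) && (u != nseq k.-1 lb)).

Definition inSstar (k : nat) (u : word) : Prop :=
  exists us : seq word, all (inS k) us /\ flatten us = u.

Definition inPrefSstar (k : nat) (u : word) : Prop :=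
  exists v : word, inSstar k (u ++ v).

(* Position j (0 <= j <= |w|-1) is forbidden in w w.r.t. S_k:
   w[j+1..n] = drop j w is not in Pref(S_k^star). *)
Definition forbidden (k : nat) (w : word) (j : nat) : Prop :=
  j < size w /\ ~ inPrefSstar k (drop j w).

(* factor w[i..j] (1-indexed, inclusive; empty if i > j) *)
Definition factor (w : word) (i j : nat) : word :=
  take (j.+1 - i) (drop i.-1 w).

(* Main.v *)
Require Import Defs.
From mathcomp Require Import all_boot.

Lemma inS_size k s : inS k s -> size s = k \/ size s = k.-1.
Proof.
rewrite /inS => /orP [/andP [/andP [/eqP -> _] _]|/andP [/andP [/eqP -> _] _]]; by [left|right].
Qed.

Arguments inS_size {k s}.

Lemma step k x : 0 < k -> k <= size x ->
  (inPrefSstar k x <-> exists s, [/\ inS k s, take (size s) x = s & inPrefSstar k (drop (size s) x)]).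
Proof.
move=> k0 kx; split.
- case=> v [[|s us] [/= Hall Hf]].
    by move: (congr1 size Hf); rewrite size_cat /= => /esym/eqP; rewrite addn_eq0 -leqn0 => /andP [H _]; move: (leq_trans k0 (leq_trans kx H)).
  move/andP: Hall => [Hs Hall].
  have sz : size s <= size x by have [->|->] := inS_size Hs; [|apply: leq_trans (leq_pred _) _].
  move: Hf; rewrite -{1}(cat_take_drop (size s) x) -catA => /eqP.
  rewrite eqseq_cat; last by rewrite size_take_min (minn_idPl sz).
  case/andP=> /eqP H1 /eqP H2.
  exists s; split => //; exists v; exists us; split => //.
- case=> s [Hs Ht [v [us [Hall Hf]]]].
  exists v; exists (s :: us); split; first by rewrite /= Hs Hall.
  by rewrite /= Hf -{1}Ht catA cat_take_drop.
Qed.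

Theorem lemma1 (k : nat) (w : word) (j : nat) :
  3 <= k -> k <= j -> forbidden k w j ->
  (forbidden k w (j - k) <->
   (forbidden k w (j - 1) \/
    factor w (j - k + 1) (j - 1) = nseq k.-1 la \/
    factor w (j - k + 1) (j - 1) = nseq k.-1 lb)).
Proof.
move=> k3 kj [jw nPj].
have k0 : 0 < k by apply: leq_trans k3.
set x := drop (j - k) w.
have szx : k <= size x.
  rewrite /x size_drop; apply: (@leq_trans (j.+1 - (j - k))); last by rewrite leq_sub2r.
  by rewrite subSn ?leq_subr // subKn.
have dk : drop k x = drop j w by rewrite /x drop_drop subnKC.
have dk1 : drop k.-1 x = drop (j - 1) w.
  rewrite /x drop_drop; congr drop.
  by rewrite -subn1 addnBAC // subnKC.
have fac : factor w (j - k + 1) (j - 1) = take k.-1 x.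
  rewrite /factor /x addn1 /= subn1 prednK; last by apply: leq_trans k0 kj.
  by congr take; rewrite subnS subKn.
have jk : j - k < size w by apply: leq_ltn_trans (leq_subr _ _) jw.
have j1 : j - 1 < size w by apply: leq_ltn_trans (leq_subr _ _) jw.
rewrite fac /forbidden.
have sz1 : size (take k.-1 x) = k.-1.
  by rewrite size_take_min; apply/minn_idPl; apply: leq_trans (leq_pred _) szx.
have key : inPrefSstar k x <->
   (inS k (take k.-1 x) /\ inPrefSstar k (drop (j - 1) w)).
  apply: (iff_trans (step _ _ k0 szx)); split.
  - case=> s [Hs Ht Hp]; case: (inS_size Hs) => Hsz.
      by rewrite Hsz dk in Hp.
    by rewrite Hsz dk1 in Hp; rewrite Hsz in Ht; rewrite Ht.
  - case=> Hs Hp; exists (take k.-1 x); rewrite sz1 dk1; split => //.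
have inSc : inS k (take k.-1 x) =
   (take k.-1 x != nseq k.-1 la) && (take k.-1 x != nseq k.-1 lb).
  rewrite /inS sz1 eqxx /=.
  have -> : (k.-1 == k) = false by rewrite -{2}(prednK k0) (ltn_eqF (ltnSn _)).
  by [].
rewrite -/x; split.
- case=> _ H.
  case Ea: (take k.-1 x == nseq k.-1 la); first by right; left; apply/eqP.
  case Eb: (take k.-1 x == nseq k.-1 lb); first by right; right; apply/eqP.
  by left; split => // Hp; apply: H; apply key; split => //; rewrite inSc Ea Eb.
- move=> H; split => // Hpx; have [Hs Hp] := proj1 key Hpx.
  rewrite inSc in Hs; case: H => [[_ H]|[E|E]] //.
  + by rewrite E eqxx in Hs.
  + by rewrite E eqxx andbF in Hs.
Qed.
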